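(* Let $X,Y$ be random variables, let $F_{Y\mid X}(y\mid x)$ denote a (regular) conditional distribution function of $Y$ given $X=x$, and for a non-decreasing Borel function $h$ let $h^*(x)=\mathbb E[h(Y)\mid X=x]=\int h(y)\,F_{Y\mid X}(\mathrm dy\mid x)$ (considered for those $h$ for which this is finite for every $x$). The following are equivalent: (i) for all non-decreasing Borel functions $g$ and $h$, the functions $g$ and $h^*$ are weakly comonotonic with respect to all product measures $\varrho_1\times\varrho_2$ of Borel probability measures on $\mathbb R$, i.e. $\iint_{\mathbb R^2}(g(x)-g(x'))(h^*(x)-h^*(x'))\,\varrho_1(\mathrm dx)\varrho_2(\mathrm dx')\ge0$ whenever this integral exists (in particular $(g(x)-g(x'))(h^*(x)-h^*(x'))\ge0$ for all $x,x'$); (ii) $Y$ is positively regression dependent on $X$, i.e. for every $y\in\mathbb R$ the function $x\mapsto F_{Y\mid X}(y\mid x)$ is non-increasing. *)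

(* Defs.v *)
From HB Require Import structures.
From mathcomp Require Import all_boot all_order all_algebra.
From mathcomp Require Import all_classical all_reals all_analysis measurable_realfun.
Set Implicit Arguments. Unset Strict Implicit. Unset Printing Implicit Defensive.
Import Order.TTheory GRing.Theory Num.Theory.
Local Open Scope classical_set_scope.
Local Open Scope ring_scope.

Definition cond_cdf (R : realType) (K : R -> probability R R) (y x : R) : \bar R :=
  K x [set` `]-oo, y]].

Definition is_regular_cond_distr (d : measure_display) (T : measurableType d)
  (R : realType) (P : probability T R) (X Y : T -> R) (K : R -> probability R R) :=
  (forall B : set R, measurable B -> measurable_fun [set: R] (fun x => K x B : \bar R)) /\
  (forall A B : set R, measurable A -> measurable B ->
     P (X @^-1` A `&` Y @^-1` B) = (\int[pushforward P X]_(x in A) K x B)%E).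

(* h^*(x) = \int h(y) F_{Y|X}(dy | x)  (used when this is finite for every x) *)
Definition hstar (R : realType) (K : R -> probability R R) (h : R -> R) (x : R) : R :=
  fine (\int[K x]_y (h y)%:E)%E.

Definition weakly_comonotonic_wrt (R : realType) (g f : R -> R)
  (rho1 rho2 : probability R R) : Prop :=
  let D := fun z : R * R => ((g z.1 - g z.2) * (f z.1 - f z.2))%:E in
  ((\int[(rho1 \x rho2)%E]_z (D^\+)%E z < +oo)%E \/
   (\int[(rho1 \x rho2)%E]_z (D^\-)%E z < +oo)%E) ->
  (0 <= \int[(rho1 \x rho2)%E]_z D z)%E.

(* Main.v *)
Require Import Defs.
From HB Require Import structures.
From mathcomp Require Import all_boot all_order all_algebra.
From mathcomp Require Import all_classical all_reals all_analysis measurable_realfun.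
From mathcomp Require Import lra.
Import Order.TTheory GRing.Theory Num.Theory.
Local Open Scope classical_set_scope.
Local Open Scope ring_scope.
Section helpers.
Local Open Scope ereal_scope.
Lemma ray_open_le (R : realType) (mu nu : probability R R) :
  (forall y : R, nu `]-oo, y]%classic <= mu `]-oo, y]%classic) ->
  forall s : R, nu `]-oo, s[%classic <= mu `]-oo, s[%classic.
Proof.
move=> H s.
pose F := fun n : nat => `]-oo, (s - n.+1%:R^-1)%R]%classic.
have mF : forall n, measurable (F n) by move=> n; exact: measurable_itv.
have FU : \bigcup_n F n = `]-oo, s[%classic.
  apply/seteqP; split => x /=.
    case=> n _; rewrite /F /= !in_itv /= => xs.
    by apply: (le_lt_trans xs); rewrite ltrBlDr ltrDl invr_gt0 ltr0n.
  rewrite in_itv /= => xs.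
  have sx : (0 < s - x)%R by rewrite subr_gt0.
  have [n Hn] : exists n : nat, ((s - x)^-1 < n.+1%:R)%R.
    exists (Num.truncn (s - x)^-1).
    exact: truncnS_gt.
  have h : (n.+1%:R^-1 < s - x)%R.
    by rewrite -[X in (_ < X)%R](invrK (s-x)%R) ltf_pV2 ?posrE ?invr_gt0 ?ltr0n.
  exists n => //; rewrite /F /= in_itv /=; rewrite lerBrDr -lerBrDl; exact: ltW.
have ndF : nondecreasing_seq F.
  move=> m n mn; apply/subsetPset => x; rewrite /F /= !in_itv /= => xm.
  apply: (le_trans xm); rewrite lerD2l lerN2 lef_pV2 ?posrE ?ltr0n // ler_nat ltnS.
  done.
have mU : measurable (\bigcup_n F n) by rewrite FU; exact: measurable_itv.
have cmu := @nondecreasing_cvg_mu _ _ _ mu F mF mU ndF; rewrite FU in cmu.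
have cnu := @nondecreasing_cvg_mu _ _ _ nu F mF mU ndF; rewrite FU in cnu.
apply: (lee_cvg_to cnu cmu).
by apply: nearW => n; exact: H.
Qed.
Lemma downset_le (R : realType) (mu nu : probability R R) :
  (forall y : R, nu `]-oo, y]%classic <= mu `]-oo, y]%classic) ->
  forall D : set R, measurable D -> (forall a b : R, (a <= b)%R -> D b -> D a) ->
  nu D <= mu D.
Proof.
move=> H D mD dD.
have [->|DT] := pselect (D = setT); first by rewrite !probability_setT.
have [->|D0] := pselect (D = set0); first by rewrite !measure0.
have [b nDb] : exists b, ~ D b.
  apply: contrapT => nex; apply: DT; apply/seteqP; split => // x _.
  by apply: contrapT => nDx; apply: nex; exists x.
have ltb : forall x, D x -> (x < b)%R.
  move=> x Dx; rewrite ltNge; apply/negP => bx; exact: nDb (dD _ _ bx Dx).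
have hs : has_sup D.
  by split; [exact/set0P/eqP | exists b => x /ltb/ltW].
set s := sup D.
have Dle : forall x, D x -> (x <= s)%R by move=> x; exact: sup_upper_bound.
have [Ds|nDs] := pselect (D s).
  have -> : D = `]-oo, s]%classic.
    apply/seteqP; split => x; rewrite /= in_itv /=; [exact: Dle| move=> xs; exact: dD xs Ds].
  exact: H.
have -> : D = `]-oo, s[%classic.
  apply/seteqP; split => x; rewrite /= in_itv /=.
    move=> Dx; rewrite lt_neqAle Dle // andbT; apply/eqP => xs; apply: nDs; by rewrite -xs.
  move=> xs; have sx : (0 < s - x)%R by rewrite subr_gt0.
  have [e De lte] := sup_adherent sx hs.
  apply: dD De; apply: ltW; move: lte; by rewrite opprB addrC subrK.
exact: ray_open_le.
Qed.
Lemma sd_le (R : realType) (mu nu : probability R R) (X : {mfun R >-> R}) :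
  {homo X : a b / (a <= b)%R} ->
  (forall y : R, nu `]-oo, y]%classic <= mu `]-oo, y]%classic) ->
  mu.-integrable setT (EFin \o X) -> nu.-integrable setT (EFin \o X) ->
  \int[mu]_y (X y)%:E <= \int[nu]_y (X y)%:E.
Proof.
move=> hX H imu inu.
have dl : forall r, nu (X @^-1` `]-oo, r]) <= mu (X @^-1` `]-oo, r]).
  move=> r; apply: downset_le => //.
    exact: measurable_funPTI.
  move=> a b ab /=; rewrite !in_itv /= => Xb; exact: le_trans (hX _ _ ab) Xb.
rewrite -(expectation_def (P:=mu)) -(expectation_def (P:=nu)).
rewrite (expectation_cdf_ccdf (P:=mu)); last exact/Lfun1_integrable.
rewrite (expectation_cdf_ccdf (P:=nu)); last exact/Lfun1_integrable.
apply: leeB.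
  apply: ge0_le_integral => //.
  - by apply: measurable_funTS; exact: (ccdf_measurable (P:=mu)).
  - by apply: measurable_funTS; exact: (ccdf_measurable (P:=nu)).
  move=> r _; rewrite /ccdf /distribution /pushforward /=.
  have -> : X @^-1` `]r, +oo[ = ~` (X @^-1` `]-oo, r]).
    by apply/seteqP; split => y; rewrite /= !in_itv /= ?andbT; rewrite ltNge => /negP.
  have mD : measurable (X @^-1` `]-oo, r]%classic) by exact: measurable_funPTI.
  rewrite (probability_setC mu mD) (probability_setC nu mD).
  exact: leeB.
apply: ge0_le_integral => //.
- by apply: measurable_funTS; exact: (cdf_measurable (P:=nu)).
- by apply: measurable_funTS; exact: (cdf_measurable (P:=mu)).
move=> r _; rewrite /cdf /distribution /pushforward /=.
exact: dl.
Qed.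
Lemma prod_dirac_int (R : realType) (a b : R) (f : R * R -> \bar R) :
  measurable_fun setT f -> \int[((\d_a : probability R R) \x (\d_b : probability R R))%E]_z f z = f (a, b).
Proof.
move=> mf.
rewrite (@eq_measure_integral _ _ _ _ (\d_(a, b))).
  by rewrite integral_dirac // diracT mul1e.
move=> A mA _.
rewrite /= /product_measure1 /= integral_dirac; last exact: measurable_fun_xsection.
rewrite diracT mul1e /= !diracE.
rewrite mem_xsection.
by [].
exact: measurableT.
Qed.
End helpers.

Theorem proposition4p4 (d : measure_display) (T : measurableType d)
  (R : realType) (P : probability T R) (X Y : T -> R)
  (mX : measurable_fun setT X) (mY : measurable_fun setT Y)
  (K : R -> probability R R) (HK : is_regular_cond_distr P X Y K) :
  (forall g h : R -> R,
     measurable_fun setT g -> {homo g : a b / a <= b} ->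
     measurable_fun setT h -> {homo h : a b / a <= b} ->
     (forall x, (K x).-integrable setT (fun y => (h y)%:E)) ->
     forall rho1 rho2 : probability R R,
       weakly_comonotonic_wrt g (hstar K h) rho1 rho2)
  <->
  (forall y x x' : R, x <= x' -> (cond_cdf K y x' <= cond_cdf K y x)%E).
Proof.
have hsmono : forall h : R -> R, measurable_fun setT h -> {homo h : a b / (a <= b)%R} ->
    (forall x, (K x).-integrable setT (fun y => (h y)%:E)) ->
    (forall y x x' : R, (x <= x')%R -> (cond_cdf K y x' <= cond_cdf K y x)%E) ->
    {homo hstar K h : a b / (a <= b)%R}.
  move=> h mh hh hi Hii a b ab; rewrite /hstar.
  apply: fine_le; try exact: (integrable_fin_num measurableT (hi _)).
  exact: (@sd_le R (K a) (K b) (@mfun_Sub _ _ R R h (mem_set mh)) hh (fun y => Hii y a b ab) (hi a) (hi b)).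
split.
- move=> Hi y x x' xx'.
  pose A := `]y, +oo[%classic : set R.
  have mA : measurable A by exact: measurable_itv.
  pose h := \1_A : R -> R.
  have mh : measurable_fun setT h by exact: measurable_indic.
  have hh : {homo h : a b / (a <= b)%R}.
    move=> a b ab; rewrite /h !indicE; have [aA|aA] := boolP (a \in A).
      rewrite mem_set ?lexx //; move: aA; rewrite /A inE /= !in_itv /= !andbT => ya.
      exact: lt_le_trans ya ab.
    by case: (_ \in _) => /=; rewrite ?ler01 ?lexx.
  have hi : forall z, (K z).-integrable setT (fun y => (h y)%:E).
    by move=> z; exact: integrable_indic.
  have hsE : forall z, hstar K h z = fine (K z A).
    by move=> z; rewrite /hstar integral_indic // setIT.
  have mid : measurable_fun setT (@id R) by [].
  have Hw := Hi id h mid (fun a b ab => ab) mh hh hi (\d_x') (\d_x).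
  rewrite /weakly_comonotonic_wrt /= in Hw.
  have mhs : measurable_fun setT (hstar K h).
    rewrite (_ : hstar K h = fun z => fine (K z A)); last by apply/funext => z; exact: hsE.
    apply: measurableT_comp; [exact: fine_measurable | exact: (HK.1 A mA)].
  pose D := fun z : R * R => ((z.1 - z.2) * (hstar K h z.1 - hstar K h z.2))%:E.
  have mD : measurable_fun setT D.
    apply/measurable_EFinP; apply: measurable_funM; apply: measurable_funB.
    - exact: measurable_fst.
    - exact: measurable_snd.
    - exact: measurableT_comp mhs measurable_fst.
    - exact: measurableT_comp mhs measurable_snd.
  have Hd : (0 <= D (x', x))%E.
    rewrite -(@prod_dirac_int R x' x D mD); apply: Hw; left.
    rewrite (@prod_dirac_int R x' x _ (measurable_funepos mD)).
    by rewrite funeposE /D /= gt_max !ltry.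
  rewrite /D /= lee_fin !hsE in Hd.
  rewrite /cond_cdf.
  have -> : [set` `]-oo, y]] = ~` A.
    apply/seteqP; split => z /=; rewrite /A /= !in_itv /= ?andbT.
      by rewrite leNgt => /negP.
    by move=> H; rewrite leNgt; apply/negP.
  rewrite !probability_setC //; apply: leeB => //.
  have [<-|xx2] := eqVneq x x'; first exact: lexx.
  have lt : (0 < x' - x)%R by rewrite subr_gt0 lt_neqAle xx2 xx'.
  rewrite pmulr_rge0 // subr_ge0 in Hd.
  by rewrite -(fineK (fin_num_measure (K x) _ mA)) -(fineK (fin_num_measure (K x') _ mA)) lee_fin.
- move=> Hii g h mg hg mh hh hi rho1 rho2; rewrite /weakly_comonotonic_wrt /= => _.
  have hs := hsmono h mh hh hi Hii.
  apply: integral_ge0 => z _; rewrite lee_fin.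
  have [le12|lt21] := leP z.1 z.2.
    by apply: mulr_le0; rewrite subr_le0; [exact: hg | exact: hs].
  by apply: mulr_ge0; rewrite subr_ge0; [exact: hg (ltW lt21) | exact: hs (ltW lt21)].
Qed.
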